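(* Let $x\in\mathbb{R}^n$. Then: (a) $T_L\subseteq T_z$; (b) $P_{T_L^\perp}LP_{T_x}=0$, $P_{T_L}LP_{T_x^\perp}=0$, and $P_{T_L^\perp}L=LP_{T_x^\perp}$; (c) for all $x'\in\mathbb{R}^n$, $P_{T_z}LP_{T_x}x'=LP_{T_x}x'$, and $P_{T_z^\perp}LP_{T_x}=0$; (d) for all $u\in\mathbb{R}^p$, $P_{T_x}L^\top P_{T_L}u=P_{T_x}L^\top u$ and $P_{T_x}L^\top P_{T_z}u=P_{T_x}L^\top u$; (e) $L^\top P_{T_z}L$ is diagonal with $(L^\top P_{T_z}L)_{i,i}=\sum_{t\in\mathcal{I}_x,\ i\in G_t}w_t^2$ for $i=1,\dots,n$.
   Context: Let $n,N\in\mathbb{N}$, let $G_1,\dots,G_N\subseteq\{1,\dots,n\}$ be nonempty groups, possibly overlapping, with $\bigcup_iG_i=\{1,\dots,n\}$, and weights $w_i>0$. $x_G$ is the subvector of $x$ indexed by $G$ (increasing order). Let $p=\sum_i|G_i|$, partition $\{1,\dots,p\}$ into consecutive blocks $J_i=\{\sum_{j<i}|G_j|+1,\dots,\sum_{j\le i}|G_j|\}$, and define $L\in\mathbb{R}^{p\times n}$ by $(Lx)_{J_i}=w_ix_{G_i}$. For $x\in\mathbb{R}^n$: $\mathcal{I}_x=\{t:x_{G_t}\ne0\}$; $\mathcal{E}_x=\{1,\dots,n\}\setminus\bigcup_{t\notin\mathcal{I}_x}G_t$, $T_x=\{x'\in\mathbb{R}^n:\mathrm{supp}(x')\subseteq\mathcal{E}_x\}$;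 $\mathcal{E}_z=\bigcup_{t\in\mathcal{I}_x}J_t$, $T_z=\{z'\in\mathbb{R}^p:\mathrm{supp}(z')\subseteq\mathcal{E}_z\}$; $\mathcal{E}_L=\mathrm{supp}(LP_{T_x}\mathbf{1}_n)\subseteq\{1,\dots,p\}$ (with $\mathbf{1}_n$ the all-ones vector), $T_L=\{z'\in\mathbb{R}^p:\mathrm{supp}(z')\subseteq\mathcal{E}_L\}$. $P_T$ denotes the orthogonal (coordinate) projection onto the coordinate subspace $T$ and $T^\perp$ its orthogonal complement. *)

(* Defs.v *)
From mathcomp Require Import all_boot all_order all_algebra.
Set Implicit Arguments. Unset Strict Implicit. Unset Printing Implicit Defensive.
Import Order.TTheory GRing.Theory Num.Theory.
Local Open Scope ring_scope.

Section GroupL.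
Variables (R : realFieldType) (n N : nat) (G : 'I_N -> {set 'I_n}) (w : 'I_N -> R).

Definition pdim : nat := (\sum_(t < N) #|G t|)%N.

Definition offs (t : 'I_N) : nat := (\sum_(s < N | (s < t)%N) #|G s|)%N.

Definition Jblk (t : 'I_N) : {set 'I_pdim} :=
  [set k : 'I_pdim | (offs t <= k < offs t + #|G t|)%N].

Definition gseq (t : 'I_N) : seq nat := map val (enum (G t)).

(* L : (L x)_{J_t} = w_t x_{G_t}: row (offs t + j) picks the j-th element of G_t *)
Definition Lmx : 'M[R]_(pdim, n) :=
  \matrix_(k < pdim, l < n)
    \sum_(t < N) (if (k \in Jblk t) && (val l == nth 0%N (gseq t) (k - offs t))
                  then w t else 0).

Definition Pset (m : nat) (S : {set 'I_m}) : 'M[R]_m :=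
  diag_mx (\row_(i < m) (i \in S)%:R).

Definition inT (m : nat) (S : {set 'I_m}) (z : 'cV[R]_m) : Prop :=
  forall k, k \notin S -> z k 0 = 0.

Definition Ix (x : 'cV[R]_n) : {set 'I_N} :=
  [set t | [exists i in G t, x i 0 != 0]].

Definition Ex (x : 'cV[R]_n) : {set 'I_n} :=
  ~: (\bigcup_(t | t \notin Ix x) G t).

Definition Ez (x : 'cV[R]_n) : {set 'I_pdim} :=
  \bigcup_(t in Ix x) Jblk t.

Definition EL (x : 'cV[R]_n) : {set 'I_pdim} :=
  [set k | (Lmx *m Pset (Ex x) *m (const_mx 1 : 'cV[R]_n)) k 0 != 0].

End GroupL.

(* Main.v *)
Require Import Defs.
From mathcomp Require Import all_boot all_order all_algebra.
From mathcomp Require Import zify.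
Set Implicit Arguments. Unset Strict Implicit. Unset Printing Implicit Defensive.
Import Order.TTheory GRing.Theory Num.Theory.
Local Open Scope ring_scope.

Section Aux.
Variables (R : realFieldType) (n N : nat) (G : 'I_N -> {set 'I_n}) (w : 'I_N -> R).

Definition SS (m : nat) : nat := (\sum_(s < N | (s < m)%N) #|G s|)%N.

Lemma SS_succ (t : 'I_N) : SS t.+1 = (SS t + #|G t|)%N.
Proof.
rewrite /SS (bigD1 t) ?ltnSn //= addnC; congr (_ + _)%N.
apply: eq_bigl => s; rewrite ltnS (ltn_neqAle s t) andbC.
by rewrite -(inj_eq val_inj).
Qed.

Lemma SS_mono m m' : (m <= m')%N -> (SS m <= SS m')%N.
Proof.
move=> H; rewrite /SS big_mkcond [X in (_ <= X)%N]big_mkcond /=.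
apply: leq_sum => s _; case: ifP => // Hs.
by rewrite (leq_trans Hs H).
Qed.

Lemma SS_N : SS N = pdim G.
Proof. by rewrite /SS /pdim; apply: eq_bigl => s; rewrite ltn_ord. Qed.

Lemma SS_0 : SS 0 = 0%N.
Proof. by rewrite /SS big_pred0. Qed.

Lemma cover (k : 'I_(pdim G)) : exists t, k \in Jblk G t.
Proof.
have ex : exists m, (k < SS m)%N by exists N; rewrite SS_N ltn_ord.
case: (ex_minnP ex) => m Hm Hmin.
case: m Hm Hmin => [|m] Hm Hmin; first by rewrite SS_0 in Hm.
have HmN : (m < N)%N.
  rewrite ltnNge; apply/negP => HN.
  have : (k < SS m)%N.
    by apply: (leq_trans (ltn_ord k)); rewrite -SS_N; apply: SS_mono.
  by move/Hmin; rewrite ltnn.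
exists (Ordinal HmN); rewrite inE /offs.
have -> : (\sum_(s < N | (s < Ordinal HmN)%N) #|G s|)%N = SS m by [].
have := SS_succ (Ordinal HmN) => /= E; rewrite E in Hm; rewrite Hm andbT.
rewrite leqNgt; apply/negP => /Hmin; by rewrite ltnn.
Qed.

Lemma disj s t (k : 'I_(pdim G)) : k \in Jblk G s -> k \in Jblk G t -> s = t.
Proof.
have key : forall s t : 'I_N, (s < t)%N -> k \in Jblk G s -> k \in Jblk G t -> False.
  move=> a b ab; rewrite !inE /offs => /andP[_ h1] /andP[h2 _].
  have := SS_succ a; rewrite /SS => E.
  have := SS_mono ab; rewrite /SS E => h3.
  have : (k < k)%N by apply: (leq_trans h1); exact: (leq_trans h3 h2).
  by rewrite ltnn.
move=> hs ht; case: (ltngtP s t) => h.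
- by case: (key _ _ h hs ht).
- by case: (key _ _ h ht hs).
- exact: val_inj.
Qed.

Lemma size_gseq t : size (gseq G t) = #|G t|.
Proof. by rewrite /gseq size_map cardE. Qed.

Lemma uniq_gseq t : uniq (gseq G t).
Proof. by rewrite /gseq (map_inj_uniq val_inj) enum_uniq. Qed.

Lemma mem_gseq t (i : 'I_n) : (val i \in gseq G t) = (i \in G t).
Proof. by rewrite /gseq (mem_map val_inj) mem_enum. Qed.

Lemma Lrow (k : 'I_(pdim G)) (l : 'I_n) t : k \in Jblk G t ->
  Lmx G w k l = if val l == nth 0%N (gseq G t) (k - offs G t) then w t else 0.
Proof.
move=> Hk; rewrite mxE (bigD1 t) //= Hk /= big1 ?addr0 // => s Hs.
case: ifP => // /andP[Hks _]; by rewrite (disj Hks Hk) eqxx in Hs.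
Qed.

Lemma key (k : 'I_(pdim G)) : exists t (a : 'I_n),
  [/\ k \in Jblk G t, a \in G t, val a = nth 0%N (gseq G t) (k - offs G t) &
      forall l, Lmx G w k l = if l == a then w t else 0].
Proof.
have [t Ht] := cover k.
have Hj : (k - offs G t < size (gseq G t))%N.
  move: Ht; rewrite inE size_gseq; lia.
have := mem_nth 0%N Hj; rewrite {1}/gseq => /mapP[a Ha Ea].
exists t, a; split => //; first by rewrite -mem_enum.
by move=> l; rewrite (Lrow _ Ht) Ea (inj_eq val_inj).
Qed.

Lemma reindex (t : 'I_N) (F : nat -> R) :
  \sum_(k < pdim G | k \in Jblk G t) F (k - offs G t)%N = \sum_(j < #|G t|) F j.
Proof.
set o := offs G t; set c := #|G t|.
have hoc : (o + c <= pdim G)%N by rewrite /o /c /offs -SS_N -SS_succ; apply: SS_mono.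
rewrite (eq_bigl (fun k : 'I_(pdim G) => (o <= k < o + c)%N)); last first.
  by move=> k; rewrite inE.
rewrite -(big_mkord (fun k => (o <= k < o + c)%N) (fun k => F (k - o)%N)).
rewrite (big_cat_nat (n:=o+c)) //=.
rewrite [X in _ + X]big_nat_cond [X in _ + X]big1 ?addr0; last first.
  by move=> i /andP[/andP[h _] h2]; move: h2; lia.
rewrite (big_cat_nat (n:=o)) ?leq_addr //=.
rewrite big_nat_cond big1 ?add0r; last by move=> i; lia.
rewrite big_nat_cond (eq_bigl (fun i => (o <= i < o + c)%N && true)) -?big_nat_cond; last by move=> i; rewrite andbT andbb.
rewrite -{1}(add0n o) big_addn addKn.
by rewrite big_mkord; apply: eq_bigr => i _; rewrite addnK.
Qed.

Lemma count_blk (t : 'I_N) (i : 'I_n) (c : R) :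
  \sum_(k < pdim G) (if (k \in Jblk G t) && (val i == nth 0%N (gseq G t) (k - offs G t))
                    then c else 0) = if i \in G t then c else 0.
Proof.
rewrite -big_mkcond big_mkcondr /=.
rewrite (reindex t (fun j => if val i == nth 0%N (gseq G t) j then c else 0)).
rewrite -size_gseq -(big_mkord xpredT (fun j => if val i == nth 0%N (gseq G t) j then c else 0)).
rewrite -(big_nth 0%N xpredT (fun x => if val i == x then c else 0)).
case: ifP => Hi.
  rewrite (bigD1_seq (val i)) ?uniq_gseq ?mem_gseq //= eqxx big1 ?addr0 //.
  by move=> x /negbTE; rewrite eq_sym => ->.
rewrite big1_seq // => x /andP[_ Hx]; case: eqP => // E.
by rewrite -E mem_gseq Hi in Hx.
Qed.


Lemma mdE m p (A : 'M[R]_(m, p)) (d : 'rV[R]_p) i j :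
  (A *m diag_mx d) i j = A i j * d 0 j.
Proof. by rewrite mul_mx_diag mxE. Qed.
Lemma dmE m p (A : 'M[R]_(m, p)) (d : 'rV[R]_m) i j :
  (diag_mx d *m A) i j = d 0 i * A i j.
Proof. by rewrite mul_diag_mx mxE. Qed.
Lemma rE m (f : 'I_m -> R) j : (\row_i f i) 0 j = f j.
Proof. by rewrite mxE. Qed.
Lemma tE m p (A : 'M[R]_(m, p)) i j : A^T i j = A j i.
Proof. by rewrite mxE. Qed.
Lemma mE m p q (A : 'M[R]_(m, p)) (B : 'M[R]_(p, q)) i j :
  (A *m B) i j = \sum_k A i k * B k j.
Proof. by rewrite mxE. Qed.
Lemma cE m p (j : 'I_m) (l : 'I_p) : (const_mx 1 : 'M[R]_(m,p)) j l = 1.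
Proof. by rewrite mxE. Qed.

Lemma facts (Hw : forall t, 0 < w t) (x : 'cV[R]_n) (k : 'I_(pdim G)) :
  exists t (a : 'I_n),
  [/\ k \in Jblk G t, val a = nth 0%N (gseq G t) (k - offs G t),
      forall l, Lmx G w k l = if l == a then w t else 0,
      (k \in EL G w x) = (a \in Ex G x) &
      ((k \in Ez G x) = (t \in Ix G x)) /\ (a \in Ex G x -> t \in Ix G x)].
Proof.
have [t [a [Hk Ha Ea HL]]] := key k.
exists t, a; split => //.
- rewrite /EL inE /Pset mE.
  rewrite (bigD1 a) //= big1 ?addr0; last first.
    by move=> j /negbTE Hj; rewrite mdE HL Hj !mul0r.
  rewrite mdE rE cE HL eqxx mulr1; case: (a \in Ex G x); rewrite ?mulr1 ?mulr0 ?eqxx //.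
  by rewrite gt_eqF.
- split.
  + apply/bigcupP/idP => [[s Hs Hks]|Ht]; first by rewrite -(disj Hks Hk).
    by exists t.
  + rewrite /Ex in_setC => /bigcupP Hn; apply/negPn/negP => Ht; apply: Hn.
    by exists t.
Qed.

End Aux.

Lemma inCEx (R : realFieldType) n N (G : 'I_N -> {set 'I_n}) (x : 'cV[R]_n) (a : 'I_n) :
  (a \in ~: Ex G x) = (a \notin Ex G x).
Proof. by rewrite in_setC. Qed.

Ltac entry G Hw x k :=
  let t := fresh "t" in let a := fresh "a" in
  let HEL := fresh "HEL" in let HEz := fresh "HEz" in let HEI := fresh "HEI" in
  let HL := fresh "HL" in let Hax := fresh "Hax" in
  have [t [a [_ _ HL HEL [HEz HEI]]]] := facts Hw x k;
  rewrite ?mdE ?dmE ?rE ?tE ?HL;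
  (case: eqP => [->|_]; last by rewrite ?mulr0 ?mul0r ?mxE);
  rewrite ?mxE ?(in_setC k) ?HEL ?HEz;
  case: (boolP (a \in Ex G x)) => Hax; [rewrite ?(HEI Hax) ?Hax ?inCEx ?Hax | rewrite ?(negbTE Hax) ?inCEx ?(negbTE Hax); case: (t \in Ix G x)];
  by rewrite /= ?mulr0n ?mulr1n ?mul0r ?mulr0 ?mulr1 ?mul1r.

Theorem lemmaA2 (R : realFieldType) (n N : nat) (G : 'I_N -> {set 'I_n})
  (w : 'I_N -> R)
  (HGne : forall t, G t != set0)
  (Hcover : \bigcup_(t < N) G t = [set: 'I_n])
  (Hw : forall t, 0 < w t)
  (x : 'cV[R]_n) :
  let L := Lmx G w in
  let PTx := Pset R (Ex G x) in
  let PTxp := Pset R (~: Ex G x) in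
  let PTz := Pset R (Ez G x) in
  let PTzp := Pset R (~: Ez G x) in
  let PTL := Pset R (EL G w x) in
  let PTLp := Pset R (~: EL G w x) in
  (* (a) *)
  (forall z : 'cV[R]_(pdim G), inT (EL G w x) z -> inT (Ez G x) z) /\
  (* (b) *)
  (PTLp *m L *m PTx = 0 /\ PTL *m L *m PTxp = 0 /\ PTLp *m L = L *m PTxp) /\
  (* (c) *)
  ((forall x' : 'cV[R]_n, PTz *m L *m PTx *m x' = L *m PTx *m x') /\
   PTzp *m L *m PTx = 0) /\
  (* (d) *)
  (forall u : 'cV[R]_(pdim G),
     PTx *m L^T *m PTL *m u = PTx *m L^T *m u /\
     PTx *m L^T *m PTz *m u = PTx *m L^T *m u) /\
  (* (e) *)
  (is_diag_mx (L^T *m PTz *m L) /\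
   forall i : 'I_n,
     (L^T *m PTz *m L) i i = \sum_(t in Ix G x | i \in G t) w t ^+ 2).
Proof.
move=> L PTx PTxp PTz PTzp PTL PTLp; rewrite /L /PTx /PTxp /PTz /PTzp /PTL /PTLp /Pset.
split.
  move=> z Hz k Hk; apply: Hz; apply: contra Hk.
  have [t [a [_ _ _ HEL [HEz HEI]]]] := facts Hw x k.
  by rewrite HEL HEz; exact: HEI.
split.
  split; [|split]; apply/matrixP => k l; entry G Hw x k.
split.
  split; last by apply/matrixP => k l; entry G Hw x k.
  suff -> : diag_mx (\row_i (i \in Ez G x)%:R) *m Lmx G w *m
            diag_mx (\row_i (i \in Ex G x)%:R) = Lmx G w *m diag_mx (\row_i (i \in Ex G x)%:R) by [].
  by apply/matrixP => k l; entry G Hw x k.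
split.
  move=> u; split; congr (_ *m u); apply/matrixP => l k; entry G Hw x k.
split.
  apply/is_diag_mxP => i j Hij; rewrite mE big1 // => k _; rewrite mdE tE rE.
  have [t [a [_ _ HL _ _]]] := facts Hw x k.
  rewrite !HL; case: eqP => [Ei|_]; last by rewrite !mul0r.
  case: eqP => [Ej|_]; last by rewrite mulr0.
  by move: Hij; rewrite Ei Ej eqxx.
move=> i; rewrite mE.
rewrite (eq_bigr (fun k : 'I_(pdim G) => \sum_(t < N)
   (if (k \in Jblk G t) && (val i == nth 0%N (gseq G t) (k - offs G t))
    then (if t \in Ix G x then w t ^+ 2 else 0) else 0))); last first.
  move=> k _; have [t0 [a [Hk Ea HL _ [HEz _]]]] := facts Hw x k.
  rewrite (bigD1 t0) //= big1 ?addr0; last first.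
    move=> s Hs; rewrite (_ : (k \in Jblk G s) = false) //.
    apply/negbTE/negP => Hks; by rewrite (disj Hks Hk) eqxx in Hs.
  rewrite Hk /= -Ea (inj_eq val_inj) mdE tE rE HL HEz.
  case: (i == a); case: (t0 \in Ix G x); by rewrite /= ?mulr1n ?mulr0n ?mulr1 ?mulr0 ?mul0r ?expr2.
rewrite exchange_big /= [RHS]big_mkcond /=; apply: eq_bigr => t _.
rewrite count_blk; by case: (t \in Ix G x); case: (i \in G t).
Qed.
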